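(* On $R_\delta=\bigoplus_{k\ge0}R^k$, the operators $H$, $i(\alpha)$ and $X$ satisfy \[[i(\alpha),X]=H,\qquad [H,i(\alpha)]=i(\alpha),\qquad [H,X]=-X,\] hence define a representation of $sl(2,\mathbb{R})$ on $R_\delta$.
   Context: Let $n\ge1$, $M=\mathbb{R}^{2n+1}$ with coordinates $(q^1,\dots,q^n,p^1,\dots,p^n,t)$. For $\mu\in\mathbb{R}$, $\mathcal{S}^k_\mu$ denotes the space of smooth functions $S(x,\xi)$ on $M\times\mathbb{R}^{2n+1}$ homogeneous polynomial of degree $k$ in $\xi=(\xi_{q^1},\dots,\xi_{q^n},\xi_{p^1},\dots,\xi_{p^n},\xi_t)$ (symmetric contravariant tensor fields with coefficients in $\mu$-densities). Fix $\delta\in\mathbb{R}$ and set $R^k=\mathcal{S}^k_{\delta+\frac{k}{n+1}}$ for $k\ge0$, $R^{-1}=0$. Let $E_s=\sum_i(p^i\partial_{p^i}+q^i\partial_{q^i})$, $\langle E_s,\xi\rangle=\sum_i(p^i\xi_{p^i}+q^i\xi_{q^i})$, $D(S)=\sum_i(\xi_{q^i}\partial_{p^i}S-\xi_{p^i}\partial_{q^i}S)+\xi_tE_s(S)-\langle E_s,\xi\rangle\partial_tS$. Operators on $R_\delta$: $i(\alpha):R^k\to R^{k-1}$, $i(\alpha)(S)=\frac12\big(\sum_i(p^i\partial_{\xi_{q^i}}S-q^i\partial_{\xi_{p^i}}S)-\partial_{\xi_t}S\big)$; $X:R^k\to R^{k+1}$, $X(S)=D(S)+(2(n+1)\delta+k)\xi_tS$;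 and $H$ acts on $R^k$ as $h_k\,\mathrm{Id}$ with $h_k=-((n+1)\delta+k)$. *)

(* Defs.v *)
From HB Require Import structures.
From mathcomp Require Import all_boot all_order all_algebra.
From mathcomp Require Import all_classical all_reals all_analysis.
Set Implicit Arguments. Unset Strict Implicit. Unset Printing Implicit Defensive.
Import Order.TTheory GRing.Theory Num.Theory.
Import numFieldNormedType.Exports.
Local Open Scope ring_scope.

Section Symbols.
Variables (R : realType) (n : nat).

(* M = R^(2n+1); points x and covectors xi are row vectors of length 2n+1.
   Coordinates: q^i at index i, p^i at index n+i (i < n), t at index 2n. *)
Definition N := (n + n).+1.
Definition V := 'rV[R]_N.
Definition qi (i : 'I_n) : 'I_N := inord i.
Definition pi (i : 'I_n) : 'I_N := inord (n + i).
Definition ti : 'I_N := ord_max.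
Definition coord (v : V) (j : 'I_N) : R := v ord0 j.
Definition ev (j : 'I_N) : V := delta_mx 0 j.

Definition symb := V -> V -> R.

Fixpoint iterD (vs : seq V) (f : V -> R) : V -> R :=
  match vs with
  | [::] => f
  | v :: vs' => fun x => derive (iterD vs' f) x v
  end.
Definition smooth (f : V -> R) : Prop :=
  forall (vs : seq V) (x : V), differentiable (iterD vs f) x.

(* S is a smooth symbol homogeneous polynomial of degree k in xi
   (element of S^k_mu: the density weight mu does not affect the
   underlying function nor the operators below). *)
Definition is_symbol (k : nat) (S : symb) : Prop :=
  exists a : {ffun 'I_N -> 'I_k.+1} -> V -> R,
    (forall m, smooth (a m)) /\
    forall x xi, S x xi =
      \sum_(m : {ffun 'I_N -> 'I_k.+1} | (\sum_(j < N) (m j : nat))%N == k)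
         a m x * \prod_(j < N) coord xi j ^+ m j.

Definition dx (j : 'I_N) (S : symb) : symb :=
  fun x xi => derive (fun y => S y xi) x (ev j).
Definition dxi (j : 'I_N) (S : symb) : symb :=
  fun x xi => derive (S x) xi (ev j).

Definition Es (S : symb) : symb := fun x xi =>
  \sum_(i < n) (coord x (pi i) * dx (pi i) S x xi + coord x (qi i) * dx (qi i) S x xi).
Definition Es_xi (x xi : V) : R :=
  \sum_(i < n) (coord x (pi i) * coord xi (pi i) + coord x (qi i) * coord xi (qi i)).

Definition Dop (S : symb) : symb := fun x xi =>
  \sum_(i < n) (coord xi (qi i) * dx (pi i) S x xi - coord xi (pi i) * dx (qi i) S x xi)
  + coord xi ti * Es S x xi - Es_xi x xi * dx ti S x xi.

Definition ialpha (S : symb) : symb := fun x xi =>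
  2^-1 * (\sum_(i < n) (coord x (pi i) * dxi (qi i) S x xi
                        - coord x (qi i) * dxi (pi i) S x xi)
          - dxi ti S x xi).

(* X on R^k; the degree k is given as a real number *)
Definition Xop (delta k : R) (S : symb) : symb := fun x xi =>
  Dop S x xi + (2 * (n.+1)%:R * delta + k) * coord xi ti * S x xi.

Definition hval (delta k : R) : R := - ((n.+1)%:R * delta + k).
Definition Hop (delta k : R) (S : symb) : symb := fun x xi => hval delta k * S x xi.

End Symbols.

(* Main.v *)
Require Import Defs.
From HB Require Import structures.
From mathcomp Require Import all_boot all_order all_algebra.
From mathcomp Require Import all_classical all_reals all_analysis.
From mathcomp Require Import ring zify.
Import Order.TTheory GRing.Theory Num.Theory.
Import numFieldNormedType.Exports.
Local Open Scope ring_scope.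
Set Implicit Arguments. Unset Strict Implicit. Unset Printing Implicit Defensive.

Section Gen.
Variables (R : realType) (U : normedModType R).
Implicit Types (f g : U -> R) (a v : U).

Lemma dvD f g a v : derivable f a v -> derivable g a v ->
  derivable (fun z => f z + g z) a v.
Proof. exact: derivableD. Qed.
Lemma drD f g a v : derivable f a v -> derivable g a v ->
  derive (fun z => f z + g z) a v = derive f a v + derive g a v.
Proof. exact: deriveD. Qed.
Lemma dvB f g a v : derivable f a v -> derivable g a v ->
  derivable (fun z => f z - g z) a v.
Proof. exact: derivableB. Qed.
Lemma drB f g a v : derivable f a v -> derivable g a v ->
  derive (fun z => f z - g z) a v = derive f a v - derive g a v.
Proof. exact: deriveB. Qed.
Lemma dvM f g a v : derivable f a v -> derivable g a v ->
  derivable (fun z => f z * g z) a v.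
Proof. exact: derivableM. Qed.
Lemma drM f g a v : derivable f a v -> derivable g a v ->
  derive (fun z => f z * g z) a v = f a * derive g a v + g a * derive f a v.
Proof. exact: deriveM. Qed.
Lemma dvC (c : R) a v : derivable (fun _ : U => c) a v.
Proof. exact: derivable_cst. Qed.
Lemma drC (c : R) a v : derive (fun _ : U => c) a v = 0.
Proof. exact: derive_cst. Qed.
Lemma dvN f a v : derivable f a v -> derivable (fun z => - f z) a v.
Proof. exact: derivableN. Qed.
Lemma drN f a v : derivable f a v -> derive (fun z => - f z) a v = - derive f a v.
Proof. exact: deriveN. Qed.

Lemma dsum (I : Type) (r : seq I) (P : pred I) (F : I -> U -> R) a v :
  (forall i, derivable (F i) a v) ->
  derivable (fun z => \sum_(i <- r | P i) F i z) a v /\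
  derive (fun z => \sum_(i <- r | P i) F i z) a v = \sum_(i <- r | P i) derive (F i) a v.
Proof.
move=> dF; elim: r => [|i r [IH1 IH2]].
  have -> : (fun z => \sum_(i <- [::] | P i) F i z) = (fun _ => 0).
    by apply/funext => z; rewrite big_nil.
  by rewrite big_nil; split; [exact: dvC | exact: drC].
have -> : (fun z => \sum_(j <- i :: r | P j) F j z) =
  if P i then (fun z => F i z + \sum_(j <- r | P j) F j z)
  else (fun z => \sum_(j <- r | P j) F j z).
  by apply/funext => z; rewrite big_cons; case: (P i).
rewrite big_cons; case: (P i) => //; split; first exact: dvD.
by rewrite drD // IH2.
Qed.

Lemma dvS (I : Type) (r : seq I) (P : pred I) (F : I -> U -> R) a v :
  (forall i, derivable (F i) a v) ->
  derivable (fun z => \sum_(i <- r | P i) F i z) a v.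
Proof. by move=> H; have [] := dsum r P H. Qed.
Lemma drS (I : Type) (r : seq I) (P : pred I) (F : I -> U -> R) a v :
  (forall i, derivable (F i) a v) ->
  derive (fun z => \sum_(i <- r | P i) F i z) a v = \sum_(i <- r | P i) derive (F i) a v.
Proof. by move=> H; have [] := dsum r P H. Qed.

Lemma difS (I : Type) (r : seq I) (P : pred I) (F : I -> U -> R) a :
  (forall i, differentiable (F i) a) ->
  differentiable (fun z => \sum_(i <- r | P i) F i z) a.
Proof.
move=> dF; elim: r => [|i r IH].
  have -> : (fun z => \sum_(i <- [::] | P i) F i z) = (fun _ => 0).
    by apply/funext => z; rewrite big_nil.
  exact: differentiable_cst.
have -> : (fun z => \sum_(j <- i :: r | P j) F j z) =
  if P i then (fun z => F i z + \sum_(j <- r | P j) F j z)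
  else (fun z => \sum_(j <- r | P j) F j z).
  by apply/funext => z; rewrite big_cons; case: (P i).
case: (P i) => //; exact: differentiableD.
Qed.

Lemma difP (I : Type) (r : seq I) (P : pred I) (F : I -> U -> R) a :
  (forall i, differentiable (F i) a) ->
  differentiable (fun z => \prod_(i <- r | P i) F i z) a.
Proof.
move=> dF; elim: r => [|i r IH].
  have -> : (fun z => \prod_(i <- [::] | P i) F i z) = (fun _ => 1).
    by apply/funext => z; rewrite big_nil.
  exact: differentiable_cst.
have -> : (fun z => \prod_(j <- i :: r | P j) F j z) =
  if P i then (fun z => F i z * \prod_(j <- r | P j) F j z)
  else (fun z => \prod_(j <- r | P j) F j z).
  by apply/funext => z; rewrite big_cons; case: (P i).
case: (P i) => //; exact: differentiableM.
Qed.

Lemma difX f e a : differentiable f a -> differentiable (fun z => f z ^+ e) a.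
Proof.
move=> df; elim: e => [|e IH].
  have -> : (fun z => f z ^+ 0) = (fun _ => 1) by apply/funext => z; rewrite expr0.
  exact: differentiable_cst.
have -> : (fun z => f z ^+ e.+1) = (fun z => f z * f z ^+ e).
  by apply/funext => z; rewrite exprS.
exact: differentiableM.
Qed.

End Gen.

Section Coord.
Variables (R : realType) (n : nat).
Lemma difcoord (j : 'I_(Defs.N n)) (a : 'rV[R]_(Defs.N n)) : differentiable (fun z : 'rV[R]_(Defs.N n) => Defs.coord z j) a.
Proof. exact: differentiable_coord. Qed.

Lemma drcoord (j : 'I_(Defs.N n)) (a v : 'rV[R]_(Defs.N n)) : derive (fun z : 'rV[R]_(Defs.N n) => Defs.coord z j) a v = Defs.coord v j.
Proof.
have @f : {linear 'M[R]_(1, N n) -> R}.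
  by exists (fun M : 'M[R]_(_, _) => M ord0 j); do 2![eexists]; do ?[constructor];
     rewrite ?mxE// => ? *; rewrite ?mxE//; move=> ?; rewrite !mxE.
rewrite (_ : (fun _ => _) = f) //.
rewrite deriveE; last exact/linear_differentiable/coord_continuous.
by rewrite diff_lin //; exact: coord_continuous.
Qed.
End Coord.

Section Sym.
Variables (R : realType) (n k : nat).
Local Notation NN := (Defs.N n).
Local Notation VV := 'rV[R]_NN.
Local Notation cd := (@Defs.coord R n).
Local Notation Idx := {ffun 'I_NN -> 'I_k.+1}.
Variables (a : Idx -> VV -> R) (S : symb R n).
Hypothesis ha : forall m, smooth (a m).
Hypothesis hS : forall x xi, S x xi =
      \sum_(m : Idx | (\sum_(j < NN) (m j : nat))%N == k)
         a m x * \prod_(j < NN) cd xi j ^+ m j.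

Definition mon (m : Idx) (xi : VV) : R := \prod_(j < NN) cd xi j ^+ m j.
Definition Pk (m : Idx) : bool := (\sum_(j < NN) (m j : nat))%N == k.

Lemma difmon m xi : differentiable (mon m) xi.
Proof. apply: difP => j; apply: difX; exact: difcoord. Qed.

Lemma difa m x : differentiable (a m) x.
Proof. exact: (ha m [::] x). Qed.

Lemma dva m x v : derivable (a m) x v.
Proof. exact/diff_derivable/difa. Qed.

Lemma dvmon m xi v : derivable (mon m) xi v.
Proof. exact/diff_derivable/difmon. Qed.

Lemma Sx_eq x : S x = fun xi => \sum_(m | Pk m) a m x * mon m xi.
Proof. by apply/funext => xi; rewrite hS. Qed.

Lemma Sy_eq xi : (fun y => S y xi) = fun y => \sum_(m | Pk m) a m y * mon m xi.
Proof. by apply/funext => y; rewrite hS. Qed.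

Lemma difPF (c : Idx -> R) xi :
  differentiable (fun xi => \sum_(m | Pk m) c m * mon m xi) xi.
Proof.
apply: difS => m; apply: differentiableM; [exact: differentiable_cst | exact: difmon].
Qed.

Lemma dvPF (c : Idx -> R) xi v :
  derivable (fun xi => \sum_(m | Pk m) c m * mon m xi) xi v.
Proof. exact/diff_derivable/difPF. Qed.

Lemma drPF (c : Idx -> R) xi v :
  derive (fun xi => \sum_(m | Pk m) c m * mon m xi) xi v =
  \sum_(m | Pk m) c m * derive (mon m) xi v.
Proof.
rewrite drS; last by move=> m; apply: dvM; [exact: dvC | exact: dvmon].
apply: eq_bigr => m _; rewrite drM; [|exact: dvC|exact: dvmon].
by rewrite drC mulr0 addr0.
Qed.

Lemma dvPA (d : Idx -> R) x v :
  derivable (fun y => \sum_(m | Pk m) a m y * d m) x v.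
Proof. apply: dvS => m; apply: dvM; [exact: dva | exact: dvC]. Qed.

Lemma drPA (d : Idx -> R) x v :
  derive (fun y => \sum_(m | Pk m) a m y * d m) x v =
  \sum_(m | Pk m) derive (a m) x v * d m.
Proof.
rewrite drS; last by move=> m; apply: dvM; [exact: dva | exact: dvC].
apply: eq_bigr => m _; rewrite drM; [|exact: dva|exact: dvC].
by rewrite drC mulr0 add0r mulrC.
Qed.

Lemma dv_Sx x xi v : derivable (S x) xi v.
Proof. rewrite Sx_eq; exact: (dvPF (c:=fun m => a m x)). Qed.
Lemma dv_Sy x xi v : derivable (fun y => S y xi) x v.
Proof. rewrite Sy_eq; exact: (dvPA (d:=fun m => mon m xi)). Qed.

Lemma dx_eq l x xi : dx l S x xi = \sum_(m | Pk m) derive (a m) x (ev R l) * mon m xi.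
Proof. by rewrite /dx Sy_eq drPA. Qed.
Lemma dxi_eq j x xi : dxi j S x xi = \sum_(m | Pk m) a m x * derive (mon m) xi (ev R j).
Proof. by rewrite /dxi Sx_eq drPF. Qed.

Lemma dv_dxS l x xi v : derivable (dx l S x) xi v.
Proof.
rewrite (_ : dx l S x = fun z => \sum_(m | Pk m) derive (a m) x (ev R l) * mon m z); last by apply/funext => z; rewrite dx_eq.
exact: (dvPF (c:=fun m => derive (a m) x (ev R l))).
Qed.
Lemma dv_dxiS j x xi v : derivable (fun y => dxi j S y xi) x v.
Proof.
rewrite (_ : (fun y => dxi j S y xi) = fun z => \sum_(m | Pk m) a m z * derive (mon m) xi (ev R j)); last by apply/funext => z; rewrite dxi_eq.
exact: (dvPA (d:=fun m => derive (mon m) xi (ev R j))).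
Qed.

Lemma schwarz l j x xi : dxi j (dx l S) x xi = dx l (dxi j S) x xi.
Proof.
rewrite /dxi.
rewrite (_ : dx l S x = fun z => \sum_(m | Pk m) derive (a m) x (ev R l) * mon m z); last by apply/funext => z; rewrite dx_eq.
rewrite drPF /dx.
rewrite (_ : (fun y => dxi j S y xi) = fun z => \sum_(m | Pk m) a m z * derive (mon m) xi (ev R j)); last by apply/funext => z; rewrite dxi_eq.
by rewrite drPA.
Qed.

Lemma homog x xi (c : R) : S x (c *: xi) = c ^+ k * S x xi.
Proof.
rewrite !hS mulr_sumr; apply: eq_bigr => m /eqP Hm.
rewrite mulrCA; congr (_ * _).
rewrite (eq_bigr (fun j => c ^+ m j * cd xi j ^+ m j)); last first.
  by move=> j _; rewrite /Defs.coord mxE exprMn.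
by rewrite big_split /= prodrXr Hm.
Qed.

Lemma derive_xi x xi : derive (S x) xi xi = k%:R * S x xi.
Proof.
have -> : derive (S x) xi xi = derive (fun y : R => y ^+ k * S x xi) 1 1.
  have E : (fun h : R => h^-1 *: ((S x \o shift xi) (h *: xi) - S x xi)) =
    (fun h : R => h^-1 *: (((fun y : R => y ^+ k * S x xi) \o shift 1) (h *: 1) - 1 ^+ k * S x xi)).
    apply/funext => h /=.
    rewrite /shift /= -{2}(scale1r xi) -scalerDl homog.
    by rewrite expr1n mul1r /GRing.scale /= mulr1.
  by rewrite /derive E.
rewrite drM; [|exact: exprn_derivable|exact: dvC].
rewrite drC mulr0 add0r exp_derive expr1n.
by rewrite /GRing.scale /= !mulr1 mulrC.
Qed.

Lemma euler x xi : \sum_(j < NN) cd xi j * dxi j S x xi = k%:R * S x xi.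
Proof.
have D : differentiable (S x) xi by rewrite Sx_eq; exact: (difPF (fun m => a m x)).
rewrite -derive_xi (deriveE _ D).
have -> : 'd (S x) xi xi = 'd (S x) xi (\sum_(j < NN) xi 0 j *: ev R j).
  by rewrite /ev -row_sum_delta.
rewrite linear_sum; apply: eq_bigr => j _.
by rewrite linearZ /= /dxi (deriveE _ D).
Qed.

End Sym.

Section Ops.
Variables (R : realType) (n k : nat).
Local Notation NN := (Defs.N n).
Local Notation VV := 'rV[R]_NN.
Local Notation cd := (@Defs.coord R n).
Variable (S : symb R n).
Hypothesis dvSx : forall x xi v, derivable (S x) xi v.
Hypothesis dvSy : forall x xi v, derivable (fun y => S y xi) x v.
Hypothesis dvdxS : forall l x xi v, derivable (dx l S x) xi v.
Hypothesis dvdxiS : forall j x xi v, derivable (fun y => dxi j S y xi) x v.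
Hypothesis schw : forall l j x xi, dxi j (dx l S) x xi = dx l (dxi j S) x xi.
Hypothesis eul : forall x xi, \sum_(j < NN) cd xi j * dxi j S x xi = k%:R * S x xi.

Lemma dvcd (j : 'I_NN) (a v : VV) : derivable (fun z : VV => cd z j) a v.
Proof. exact/diff_derivable/difcoord. Qed.

Ltac dvt := rewrite ?/Es ?/Es_xi; lazymatch goal with
  | |- derivable (fun z => @?f z + @?g z) _ _ => apply: dvD; [dvt|dvt]
  | |- derivable (fun z => @?f z - @?g z) _ _ => apply: dvB; [dvt|dvt]
  | |- derivable (fun z => @?f z * @?g z) _ _ => apply: dvM; [dvt|dvt]
  | |- derivable (fun z => - @?f z) _ _ => apply: dvN; dvt
  | |- derivable (fun z => \sum_(i < _) @?F z i) _ _ => apply: dvS => ?; dvt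
  | |- derivable (fun z => cd z _) _ _ => exact: dvcd
  | |- derivable (fun z => S _ z) _ _ => exact: dvSx
  | |- derivable (S _) _ _ => exact: dvSx
  | |- derivable (fun z => dx _ S _ z) _ _ => exact: dvdxS
  | |- derivable (dx _ S _) _ _ => exact: dvdxS
  | |- derivable (fun z => S z _) _ _ => exact: dvSy
  | |- derivable (fun z => dxi _ S z _) _ _ => exact: dvdxiS
  | |- _ => exact: dvC
  end.

Lemma cD (f g : VV -> R) a v df dg : derivable f a v -> derivable g a v ->
  derive f a v = df -> derive g a v = dg -> derive (fun z => f z + g z) a v = df + dg.
Proof. by move=> ? ? <- <-; exact: drD. Qed.
Lemma cB (f g : VV -> R) a v df dg : derivable f a v -> derivable g a v ->
  derive f a v = df -> derive g a v = dg -> derive (fun z => f z - g z) a v = df - dg.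
Proof. by move=> ? ? <- <-; exact: drB. Qed.
Lemma cM (f g : VV -> R) a v df dg : derivable f a v -> derivable g a v ->
  derive f a v = df -> derive g a v = dg -> derive (fun z => f z * g z) a v = f a * dg + g a * df.
Proof. by move=> ? ? <- <-; exact: drM. Qed.
Lemma cN (f : VV -> R) a v df : derivable f a v ->
  derive f a v = df -> derive (fun z => - f z) a v = - df.
Proof. by move=> ? <-; exact: drN. Qed.
Lemma cS (F : 'I_n -> VV -> R) a v (G : 'I_n -> R) :
  (forall i, derivable (F i) a v) -> (forall i, derive (F i) a v = G i) ->
  derive (fun z => \sum_(i < n) F i z) a v = \sum_(i < n) G i.
Proof. by move=> ? HG; rewrite drS //; apply: eq_bigr => i _; rewrite HG. Qed.
Lemma cMc (g : VV -> R) (c : R) a v dg : derivable g a v ->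
  derive g a v = dg -> derive (fun z => c * g z) a v = c * dg.
Proof. by move=> ? <-; rewrite drM // ?drC ?mulr0 ?addr0 //; exact: dvC. Qed.
Lemma schw' l j x xi : derive (dx l S x) xi (ev R j) = dx l (dxi j S) x xi.
Proof. exact: schw. Qed.
Lemma cC (c : R) a v : derive (fun _ : VV => c) a v = 0.
Proof. exact: drC. Qed.
Lemma ccd (j : 'I_NN) a v : derive (fun z : VV => cd z j) a v = cd v j.
Proof. exact: drcoord. Qed.

Ltac drt := rewrite ?/Es ?/Es_xi; lazymatch goal with
  | |- derive (fun z => @?f z + @?g z) _ _ = _ => apply: cD; [dvt|dvt|drt|drt]
  | |- derive (fun z => @?f z - @?g z) _ _ = _ => apply: cB; [dvt|dvt|drt|drt]
  | |- derive (fun z => @?f z * @?g z) ?a _ = _ =>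
      let c1 := eval cbv beta in (f a) in let c2 := eval cbv beta in (f 0) in
      tryif constr_eq c1 c2 then (apply: cMc; [dvt|drt]) else (apply: cM; [dvt|dvt|drt|drt])
  | |- derive (fun z => - @?f z) _ _ = _ => apply: cN; [dvt|drt]
  | |- derive (fun z => \sum_(i < _) @?F z i) _ _ = _ => apply: cS => ?; [dvt|drt]
  | |- derive (fun z => cd z _) _ _ = _ => exact: ccd
  | |- derive (fun z => S _ z) _ _ = _ => reflexivity
  | |- derive (S _) _ _ = _ => reflexivity
  | |- derive (fun z => dx _ S _ z) _ (ev R _) = _ => exact: schw'
  | |- derive (dx _ S _) _ (ev R _) = _ => exact: schw'
  | |- derive (dx _ S _) _ _ = _ => reflexivity
  | |- derive (fun z => S z _) _ _ = _ => reflexivity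
  | |- derive (fun z => dxi _ S z _) _ _ = _ => reflexivity
  | |- _ => exact: cC
  end.


Lemma vq (i : 'I_n) : nat_of_ord (qi i : 'I_NN) = i.
Proof. rewrite /qi inordK //; have := ltn_ord i; rewrite /Defs.N; lia. Qed.
Lemma vp (i : 'I_n) : nat_of_ord (Defs.pi i : 'I_NN) = (n + i)%N.
Proof. rewrite /Defs.pi inordK //; have := ltn_ord i; rewrite /Defs.N; lia. Qed.
Lemma vt : nat_of_ord (ti n) = (n + n)%N.
Proof. by []. Qed.

Lemma cde (j r : 'I_NN) : cd (ev R j) r = (j == r)%:R.
Proof. by rewrite /Defs.coord /ev mxE (eq_sym r); case: eqP. Qed.

Lemma eqqq (i l : 'I_n) : (qi i == qi l :> 'I_NN) = (i == l).
Proof. by rewrite -val_eqE /= !vq val_eqE. Qed.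
Lemma eqpp (i l : 'I_n) : (Defs.pi i == Defs.pi l :> 'I_NN) = (i == l).
Proof. by rewrite -val_eqE /= !vp eqn_add2l val_eqE. Qed.
Lemma eqqp (i l : 'I_n) : (qi i == Defs.pi l :> 'I_NN) = false.
Proof. rewrite -val_eqE /= vq vp; apply/negbTE; have := ltn_ord i; lia. Qed.
Lemma eqpq (i l : 'I_n) : (Defs.pi i == qi l :> 'I_NN) = false.
Proof. by rewrite eq_sym eqqp. Qed.
Lemma eqqt (i : 'I_n) : (qi i == ti n :> 'I_NN) = false.
Proof. rewrite -val_eqE /= vq ?vt; apply/negbTE; have := ltn_ord i; lia. Qed.
Lemma eqpt (i : 'I_n) : (Defs.pi i == ti n :> 'I_NN) = false.
Proof. rewrite -val_eqE /= vp ?vt; apply/negbTE; have := ltn_ord i; lia. Qed.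
Lemma eqtq (i : 'I_n) : (ti n == qi i :> 'I_NN) = false.
Proof. by rewrite eq_sym eqqt. Qed.
Lemma eqtp (i : 'I_n) : (ti n == Defs.pi i :> 'I_NN) = false.
Proof. by rewrite eq_sym eqpt. Qed.

Lemma sum_delta (f : 'I_n -> R) (i0 : 'I_n) : \sum_(i < n) f i * (i0 == i)%:R = f i0.
Proof.
rewrite (bigD1 i0) //= eqxx mulr1 big1 ?addr0 // => i /negbTE.
by rewrite eq_sym => ->; rewrite mulr0.
Qed.
Lemma sum_zero (f : 'I_n -> R) : \sum_(i < n) f i * (false)%:R = 0.
Proof. by rewrite big1 // => i _; rewrite mulr0. Qed.

Lemma dqq (f : 'I_n -> R) i0 : \sum_(i < n) f i * cd (ev R (qi i0)) (qi i) = f i0.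
Proof. by under eq_bigr do rewrite cde eqqq; rewrite sum_delta. Qed.
Lemma dpp (f : 'I_n -> R) i0 : \sum_(i < n) f i * cd (ev R (Defs.pi i0)) (Defs.pi i) = f i0.
Proof. by under eq_bigr do rewrite cde eqpp; rewrite sum_delta. Qed.
Lemma dqp (f : 'I_n -> R) i0 : \sum_(i < n) f i * cd (ev R (qi i0)) (Defs.pi i) = 0.
Proof. by under eq_bigr do rewrite cde eqqp; rewrite sum_zero. Qed.
Lemma dpq (f : 'I_n -> R) i0 : \sum_(i < n) f i * cd (ev R (Defs.pi i0)) (qi i) = 0.
Proof. by under eq_bigr do rewrite cde eqpq; rewrite sum_zero. Qed.
Lemma dtq (f : 'I_n -> R) : \sum_(i < n) f i * cd (ev R (ti n)) (qi i) = 0.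
Proof. by under eq_bigr do rewrite cde eqtq; rewrite sum_zero. Qed.
Lemma dtp (f : 'I_n -> R) : \sum_(i < n) f i * cd (ev R (ti n)) (Defs.pi i) = 0.
Proof. by under eq_bigr do rewrite cde eqtp; rewrite sum_zero. Qed.
Lemma dqt i0 : cd (ev R (qi i0)) (ti n) = 0.
Proof. by rewrite cde eqqt. Qed.
Lemma dpt i0 : cd (ev R (Defs.pi i0)) (ti n) = 0.
Proof. by rewrite cde eqpt. Qed.
Lemma dtt : cd (ev R (ti n)) (ti n) = 1.
Proof. by rewrite cde eqxx. Qed.

Lemma sum_split4 (a b c d e f : 'I_n -> R) :
  \sum_(i < n) (a i + b i * d i - (c i + e i * f i)) =
  \sum_(i < n) (a i - c i) + \sum_(i < n) b i * d i - \sum_(i < n) e i * f i.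
Proof.
rewrite (eq_bigr (fun i => (a i - c i) + b i * d i - e i * f i)); last by move=> i _; ring.
by rewrite sumrB big_split.
Qed.


Lemma split_N (F : 'I_NN -> R) :
  \sum_(j < NN) F j = \sum_(i < n) F (qi i) + \sum_(i < n) F (Defs.pi i) + F (ti n).
Proof.
rewrite /Defs.N big_ord_recr /= big_split_ord /=.
congr (_ + _ + _); apply: eq_bigr => i _; congr F; apply: val_inj => /=.
  by rewrite vq.
by rewrite vp.
Qed.

Section At.
Variables (x xi : VV).
Local Notation P i := (cd x (Defs.pi i)).
Local Notation Q i := (cd x (qi i)).
Local Notation yq i := (cd xi (qi i)).
Local Notation yp i := (cd xi (Defs.pi i)).
Local Notation yt := (cd xi (ti n)).
Local Notation Sx l := (dx l S x xi).
Local Notation Sy j := (dxi j S x xi).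
Local Notation M l j := (dx l (dxi j S) x xi).
Local Notation s := (S x xi).

Definition U j := \sum_(i < n) (yq i * M (Defs.pi i) j - yp i * M (qi i) j).
Definition W j := \sum_(i < n) (P i * M (Defs.pi i) j + Q i * M (qi i) j).
Definition Vf l := \sum_(i < n) (P i * M l (qi i) - Q i * M l (Defs.pi i)).
Definition X1 := \sum_(i < n) (P i * U (qi i) - Q i * U (Defs.pi i)).
Definition X2 := \sum_(i < n) (P i * W (qi i) - Q i * W (Defs.pi i)).
Definition Y := \sum_(i < n) (P i * Sy (qi i) - Q i * Sy (Defs.pi i)).
Definition Eul := \sum_(i < n) (yq i * Sy (qi i) + yp i * Sy (Defs.pi i)).

Lemma A_gen delta kk j :
  dxi j (Xop delta kk S) x xi =
  (\sum_(i < n) (yq i * M (Defs.pi i) j + Sx (Defs.pi i) * cd (ev R j) (qi i)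
       - (yp i * M (qi i) j + Sx (qi i) * cd (ev R j) (Defs.pi i)))
   + (yt * W j + Es S x xi * cd (ev R j) (ti n)))
  - (Es_xi x xi * M (ti n) j + Sx (ti n) * Es_xi x (ev R j))
  + ((2 * n.+1%:R * delta + kk) * yt * Sy j + s * ((2 * n.+1%:R * delta + kk) * cd (ev R j) (ti n))).
Proof.
rewrite {1}/dxi /Xop /Dop.
etransitivity; first drt.
reflexivity.
Qed.


Lemma Esxi_q i0 : Es_xi x (ev R (qi i0)) = Q i0.
Proof. by rewrite /Es_xi big_split /= dqp dqq add0r. Qed.
Lemma Esxi_p i0 : Es_xi x (ev R (Defs.pi i0)) = P i0.
Proof. by rewrite /Es_xi big_split /= dpp dpq addr0. Qed.
Lemma Esxi_t : Es_xi x (ev R (ti n)) = 0.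
Proof. by rewrite /Es_xi big_split /= dtp dtq addr0. Qed.

Lemma A_q delta kk i0 :
  dxi (qi i0) (Xop delta kk S) x xi =
  Sx (Defs.pi i0) + U (qi i0) + yt * W (qi i0) - Q i0 * Sx (ti n)
  - Es_xi x xi * M (ti n) (qi i0) + (2 * n.+1%:R * delta + kk) * yt * Sy (qi i0).
Proof.
rewrite A_gen sum_split4 dqq dqp dqt Esxi_q -/(U (qi i0)); ring.
Qed.
Lemma A_p delta kk i0 :
  dxi (Defs.pi i0) (Xop delta kk S) x xi =
  - Sx (qi i0) + U (Defs.pi i0) + yt * W (Defs.pi i0) - P i0 * Sx (ti n)
  - Es_xi x xi * M (ti n) (Defs.pi i0) + (2 * n.+1%:R * delta + kk) * yt * Sy (Defs.pi i0).
Proof.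
rewrite A_gen sum_split4 dpq dpp dpt Esxi_p -/(U (Defs.pi i0)); ring.
Qed.
Lemma A_t delta kk :
  dxi (ti n) (Xop delta kk S) x xi =
  U (ti n) + yt * W (ti n) + Es S x xi - Es_xi x xi * M (ti n) (ti n)
  + (2 * n.+1%:R * delta + kk) * (s + yt * Sy (ti n)).
Proof.
rewrite A_gen sum_split4 dtq dtp dtt Esxi_t -/(U (ti n)); ring.
Qed.

Lemma B_gen l :
  dx l (ialpha S) x xi =
  2^-1 * (\sum_(i < n) (P i * M l (qi i) + Sy (qi i) * cd (ev R l) (Defs.pi i)
        - (Q i * M l (Defs.pi i) + Sy (Defs.pi i) * cd (ev R l) (qi i))) - M l (ti n)).
Proof.
rewrite {1}/dx /ialpha.
etransitivity; first drt.
reflexivity.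
Qed.

Lemma B_p l0 : dx (Defs.pi l0) (ialpha S) x xi =
  2^-1 * (Vf (Defs.pi l0) + Sy (qi l0) - M (Defs.pi l0) (ti n)).
Proof. rewrite B_gen sum_split4 dpp dpq -/(Vf (Defs.pi l0)); ring. Qed.
Lemma B_q l0 : dx (qi l0) (ialpha S) x xi =
  2^-1 * (Vf (qi l0) - Sy (Defs.pi l0) - M (qi l0) (ti n)).
Proof. rewrite B_gen sum_split4 dqp dqq -/(Vf (qi l0)); ring. Qed.
Lemma B_t : dx (ti n) (ialpha S) x xi = 2^-1 * (Vf (ti n) - M (ti n) (ti n)).
Proof. rewrite B_gen sum_split4 dtp dtq -/(Vf (ti n)); ring. Qed.



End At.

End Ops.

Section Alg.
Variables (R : realType) (n : nat).
Local Notation NN := (Defs.N n).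
Local Notation pp := (@Defs.pi n).
Local Notation qq := (@Defs.qi n).
Local Notation tt := (Defs.ti n).
Variables (P Q yq yp : 'I_n -> R) (yt s Esxi Es0 : R) (Sx Sy : 'I_NN -> R)
  (Mf : 'I_NN -> 'I_NN -> R).

Definition aU j := \sum_(i < n) (yq i * Mf (pp i) j - yp i * Mf (qq i) j).
Definition aW j := \sum_(i < n) (P i * Mf (pp i) j + Q i * Mf (qq i) j).
Definition aV l := \sum_(i < n) (P i * Mf l (qq i) - Q i * Mf l (pp i)).
Definition aX1 := \sum_(i < n) (P i * aU (qq i) - Q i * aU (pp i)).
Definition aX2 := \sum_(i < n) (P i * aW (qq i) - Q i * aW (pp i)).
Definition aY := \sum_(i < n) (P i * Sy (qq i) - Q i * Sy (pp i)).
Definition aEul := \sum_(i < n) (yq i * Sy (qq i) + yp i * Sy (pp i)).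

Lemma sum5 (a b c d e : 'I_n -> R) (c1 c2 c3 : R) :
  \sum_(i < n) (a i + b i + c1 * c i - c2 * d i + c3 * e i) =
  \sum_(i < n) a i + \sum_(i < n) b i + c1 * \sum_(i < n) c i
  - c2 * \sum_(i < n) d i + c3 * \sum_(i < n) e i.
Proof. by rewrite !big_split /= sumrN -!mulr_sumr. Qed.

Lemma sum3 (a b c : 'I_n -> R) (c1 : R) :
  \sum_(i < n) c1 * (a i + b i - c i) =
  c1 * (\sum_(i < n) a i + \sum_(i < n) b i - \sum_(i < n) c i).
Proof. by rewrite -mulr_sumr sumrB big_split. Qed.

Lemma sumL (c d : R) (f g : 'I_n -> R) :
  c * (\sum_(i < n) f i) - d * (\sum_(i < n) g i) = \sum_(i < n) (c * f i - d * g i).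
Proof. by rewrite !mulr_sumr -sumrB. Qed.
Lemma sumLp (c d : R) (f g : 'I_n -> R) :
  c * (\sum_(i < n) f i) + d * (\sum_(i < n) g i) = \sum_(i < n) (c * f i + d * g i).
Proof. by rewrite !mulr_sumr -big_split. Qed.

Lemma aE1 : aX1 = \sum_(l < n) (yq l * aV (pp l) - yp l * aV (qq l)).
Proof.
rewrite /aX1 /aV /aU.
under eq_bigr => i _ do rewrite sumL.
under [RHS]eq_bigr => l _ do rewrite sumL.
rewrite exchange_big; apply: eq_bigr => i _; apply: eq_bigr => l _; ring.
Qed.

Lemma aE2 : aX2 = \sum_(l < n) (P l * aV (pp l) + Q l * aV (qq l)).
Proof.
rewrite /aX2 /aV /aW.
under eq_bigr => i _ do rewrite sumL.
under [RHS]eq_bigr => l _ do rewrite sumLp.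
rewrite exchange_big; apply: eq_bigr => i _; apply: eq_bigr => l _; ring.
Qed.

Variables (delta kk : R) (Aq Ap : 'I_n -> R) (At : R) (Bp Bq : 'I_n -> R) (Bt I : R).
Local Notation K := (2 * n.+1%:R * delta + kk).
Hypothesis hAq : forall i, Aq i = Sx (pp i) + aU (qq i) + yt * aW (qq i) - Q i * Sx tt
  - Esxi * Mf tt (qq i) + K * yt * Sy (qq i).
Hypothesis hAp : forall i, Ap i = - Sx (qq i) + aU (pp i) + yt * aW (pp i) - P i * Sx tt
  - Esxi * Mf tt (pp i) + K * yt * Sy (pp i).
Hypothesis hAt : At = aU tt + yt * aW tt + Es0 - Esxi * Mf tt tt + K * (s + yt * Sy tt).
Hypothesis hBp : forall l, Bp l = 2^-1 * (aV (pp l) + Sy (qq l) - Mf (pp l) tt).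
Hypothesis hBq : forall l, Bq l = 2^-1 * (aV (qq l) - Sy (pp l) - Mf (qq l) tt).
Hypothesis hBt : Bt = 2^-1 * (aV tt - Mf tt tt).
Hypothesis hI : I = 2^-1 * (aY - Sy tt).
Hypothesis hE : Es0 = \sum_(i < n) (P i * Sx (pp i) + Q i * Sx (qq i)).
Hypothesis hEul : aEul + yt * Sy tt = kk * s.

Lemma ALG :
  2^-1 * (\sum_(i < n) (P i * Aq i - Q i * Ap i) - At)
  - ((\sum_(i < n) (yq i * Bp i - yp i * Bq i) + yt * \sum_(i < n) (P i * Bp i + Q i * Bq i)
      - Esxi * Bt) + (2 * n.+1%:R * delta + (kk - 1)) * yt * I)
  = - (n.+1%:R * delta + kk) * s.
Proof.
under eq_bigr => i _ do rewrite hAq hAp.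
rewrite (eq_bigr (fun i => (P i * Sx (pp i) + Q i * Sx (qq i))
   + (P i * aU (qq i) - Q i * aU (pp i)) + yt * (P i * aW (qq i) - Q i * aW (pp i))
   - Esxi * (P i * Mf tt (qq i) - Q i * Mf tt (pp i))
   + (K * yt) * (P i * Sy (qq i) - Q i * Sy (pp i)))); last first.
  by move=> i _; ring.
rewrite sum5 -/aX1 -/aX2 -/aY -/(aV tt) -hE.
under eq_bigr => l _ do rewrite hBp hBq.
rewrite (eq_bigr (fun l => 2^-1 * ((yq l * Sy (qq l) + yp l * Sy (pp l))
   + (yq l * aV (pp l) - yp l * aV (qq l))
   - (yq l * Mf (pp l) tt - yp l * Mf (qq l) tt)))); last first.
  by move=> l _; ring.
rewrite sum3 -/aEul -aE1 -/(aU tt).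
under eq_bigr => l _ do rewrite hBp hBq.
rewrite (eq_bigr (fun l => 2^-1 * ((P l * Sy (qq l) - Q l * Sy (pp l))
   + (P l * aV (pp l) + Q l * aV (qq l))
   - (P l * Mf (pp l) tt + Q l * Mf (qq l) tt)))); last first.
  by move=> l _; ring.
rewrite sum3 -/aY -aE2 -/(aW tt).
rewrite hAt hBt hI.
have -> : aEul = kk * s - yt * Sy tt by rewrite -hEul; ring.
by field.
Qed.

End Alg.

Section Scal.
Variables (R : realType) (n : nat).
Local Notation NN := (Defs.N n).
Lemma ial_sc (c : R) (F G : 'I_NN -> R) (P Q : 'I_n -> R) :
  (forall j, G j = c * F j) ->
  2^-1 * (\sum_(i < n) (P i * G (qi i) - Q i * G (Defs.pi i)) - G (ti n)) =
  c * (2^-1 * (\sum_(i < n) (P i * F (qi i) - Q i * F (Defs.pi i)) - F (ti n))).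
Proof.
move=> h; under eq_bigr do rewrite !h; rewrite h.
rewrite (eq_bigr (fun i => c * (P i * F (qi i) - Q i * F (Defs.pi i)))); last by move=> i _; ring.
rewrite -mulr_sumr; ring.
Qed.
Lemma dop_sc (c : R) (F G : 'I_NN -> R) (P Q yq yp : 'I_n -> R) (yt E : R) :
  (forall j, G j = c * F j) ->
  \sum_(i < n) (yq i * G (Defs.pi i) - yp i * G (qi i))
   + yt * \sum_(i < n) (P i * G (Defs.pi i) + Q i * G (qi i)) - E * G (ti n) =
  c * (\sum_(i < n) (yq i * F (Defs.pi i) - yp i * F (qi i))
   + yt * \sum_(i < n) (P i * F (Defs.pi i) + Q i * F (qi i)) - E * F (ti n)).
Proof.
move=> h; under eq_bigr do rewrite !h; under [X in yt * X]eq_bigr do rewrite !h; rewrite h.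
rewrite (eq_bigr (fun i => c * (yq i * F (Defs.pi i) - yp i * F (qi i)))); last by move=> i _; ring.
rewrite [X in yt * X](eq_bigr (fun i => c * (P i * F (Defs.pi i) + Q i * F (qi i)))); last by move=> i _; ring.
rewrite -!mulr_sumr; ring.
Qed.
End Scal.

Section Main.
Variables (R : realType) (n k : nat).
Local Notation NN := (Defs.N n).
Local Notation VV := 'rV[R]_NN.
Local Notation cd := (@Defs.coord R n).
Variable (S : symb R n).
Hypothesis dvSx : forall x xi v, derivable (S x) xi v.
Hypothesis dvSy : forall x xi v, derivable (fun y => S y xi) x v.
Hypothesis dvdxS : forall l x xi v, derivable (dx l S x) xi v.
Hypothesis dvdxiS : forall j x xi v, derivable (fun y => dxi j S y xi) x v.
Hypothesis schw : forall l j x xi, dxi j (dx l S) x xi = dx l (dxi j S) x xi.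
Hypothesis eul : forall x xi, \sum_(j < NN) cd xi j * dxi j S x xi = k%:R * S x xi.

Lemma rel1 (x xi : VV) delta :
  ialpha (Xop delta k%:R S) x xi - Xop delta (k%:R - 1) (ialpha S) x xi
  = Hop delta k%:R S x xi.
Proof.
refine (@ALG R n (fun i => cd x (Defs.pi i)) (fun i => cd x (qi i))
  (fun i => cd xi (qi i)) (fun i => cd xi (Defs.pi i)) (cd xi (ti n)) (S x xi)
  (Es_xi x xi) (Es S x xi) (fun l => dx l S x xi) (fun j => dxi j S x xi)
  (fun l j => dx l (dxi j S) x xi) delta k%:R
  (fun i => dxi (qi i) (Xop delta k%:R S) x xi)
  (fun i => dxi (Defs.pi i) (Xop delta k%:R S) x xi)
  (dxi (ti n) (Xop delta k%:R S) x xi)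
  (fun l => dx (Defs.pi l) (ialpha S) x xi)
  (fun l => dx (qi l) (ialpha S) x xi)
  (dx (ti n) (ialpha S) x xi) (ialpha S x xi)
  (fun i => A_q dvSx dvdxS schw x xi delta k%:R i)
  (fun i => A_p dvSx dvdxS schw x xi delta k%:R i)
  (A_t dvSx dvdxS schw x xi delta k%:R)
  (fun l => B_p dvdxiS x xi l)
  (fun l => B_q dvdxiS x xi l)
  (B_t dvdxiS x xi)
  (erefl _) (erefl _) _).
by rewrite -eul split_N /aEul big_split /=.
Qed.

Lemma dxiH delta kk j (x xi : VV) :
  dxi j (Hop delta kk S) x xi = hval n delta kk * dxi j S x xi.
Proof. by rewrite /dxi /Hop; apply: cMc => //; exact: dvSx. Qed.
Lemma dxH delta kk l (x xi : VV) :
  dx l (Hop delta kk S) x xi = hval n delta kk * dx l S x xi.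
Proof. by rewrite /dx /Hop; apply: (cMc (g := fun y => S y xi)) => //; exact: dvSy. Qed.

Lemma ialH delta kk (x xi : VV) :
  ialpha (Hop delta kk S) x xi = hval n delta kk * ialpha S x xi.
Proof.
exact: (@ial_sc R n (hval n delta kk) (fun j => dxi j S x xi) (fun j => dxi j (Hop delta kk S) x xi)
  (fun i => cd x (Defs.pi i)) (fun i => cd x (qi i)) (fun j => dxiH delta kk j x xi)).
Qed.

Lemma dopH delta kk (x xi : VV) :
  Dop (Hop delta kk S) x xi = hval n delta kk * Dop S x xi.
Proof.
exact: (@dop_sc R n (hval n delta kk) (fun j => dx j S x xi) (fun j => dx j (Hop delta kk S) x xi)
  (fun i => cd x (Defs.pi i)) (fun i => cd x (qi i))
  (fun i => cd xi (qi i)) (fun i => cd xi (Defs.pi i)) (cd xi (ti n)) (Es_xi x xi)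
  (fun j => dxH delta kk j x xi)).
Qed.

Lemma rel2 (x xi : VV) delta :
  Hop delta (k%:R - 1) (ialpha S) x xi - ialpha (Hop delta k%:R S) x xi = ialpha S x xi.
Proof. rewrite ialH /Hop /hval; ring. Qed.

Lemma rel3 (x xi : VV) delta :
  Hop delta (k%:R + 1) (Xop delta k%:R S) x xi - Xop delta k%:R (Hop delta k%:R S) x xi
  = - Xop delta k%:R S x xi.
Proof. rewrite /Xop dopH /Hop /hval; ring. Qed.
End Main.

Theorem proposition4p2 (R : realType) (n : nat) (hn : (1 <= n)%N)
  (delta : R) (k : nat) (S : symb R n) :
  is_symbol k S ->
  [/\ (* [i(alpha), X] = H *)
      (forall x xi,
         ialpha (Xop delta k%:R S) x xi - Xop delta (k%:R - 1) (ialpha S) x xi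
         = Hop delta k%:R S x xi),
      (* [H, i(alpha)] = i(alpha) *)
      (forall x xi,
         Hop delta (k%:R - 1) (ialpha S) x xi - ialpha (Hop delta k%:R S) x xi
         = ialpha S x xi)
    & (* [H, X] = -X *)
      (forall x xi,
         Hop delta (k%:R + 1) (Xop delta k%:R S) x xi - Xop delta k%:R (Hop delta k%:R S) x xi
         = - Xop delta k%:R S x xi)].
Proof.
move=> [a [ha hS]].
have dvSx : forall x xi v, derivable (S x) xi v.
  by move=> x xi v; exact: (dv_Sx hS).
have dvSy : forall x xi v, derivable (fun y => S y xi) x v.
  by move=> x xi v; exact: (dv_Sy ha hS).
have dvdxS : forall l x xi v, derivable (dx l S x) xi v.
  by move=> l x xi v; exact: (dv_dxS ha hS).
have dvdxiS : forall j x xi v, derivable (fun y => dxi j S y xi) x v.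
  by move=> j x xi v; exact: (dv_dxiS ha hS).
have schw := schwarz ha hS.
have eul := euler hS.
split => x xi.
- exact: (rel1 dvSx dvdxS dvdxiS schw eul).
- exact: (rel2 k dvSx).

- exact: (rel3 k dvSy).
Qed.
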